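(* Consider the Bregman proximal augmented Lagrangian method described in the context, with $\psi,\phi$ Legendre and $g=\delta_{-\mathcal{C}}$ for a closed convex cone $\mathcal{C}\subseteq\mathbb{R}^m$ whose dual cone satisfies $\mathcal{C}^*\subseteq\operatorname{dom}\phi$. Let $(x^\star,y^\star)$ be a saddle point of $L$ with $x^\star\in\operatorname{dom}\psi$, $y^\star\in\operatorname{dom}\phi$, and let $R:=2\|y^\star\|+1$. Then for every $K\ge0$, with $\breve s^K=\frac{\sum_{k=0}^K\sigma_ks^k}{\sum_{k=0}^K\sigma_k}$, $$\max\Big\{|f(\breve s^K)-f(x^\star)|,\ \operatorname{dist}(\mathcal{A}(\breve s^K),-\mathcal{C})\Big\}\le\frac{1}{\sum_{k=0}^K\sigma_k}\Big(D_\psi(x^\star,x^0)+\sup_{y\in\mathcal{C}^*\cap B_R}D_\phi(y,y^0)\Big).$$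
   Context: Let $f\in\Gamma_0(\mathbb{R}^n)$, $g\in\Gamma_0(\mathbb{R}^m)$ (proper lsc convex), $A\in\mathbb{R}^{m\times n}$, $b\in\mathbb{R}^m$, $\mathcal{A}(x)=Ax-b$. $L(x,y)=f(x)+\langle\mathcal{A}(x),y\rangle-g^*(y)$; KKT operator $T(x,y)=(\partial f(x)+A^\top y)\times(\partial g^*(y)+b-Ax)$ (maximal monotone). $\delta_S$ is the indicator function of a set $S$; the dual cone is $\mathcal{C}^*=\{y:\langle y,c\rangle\ge0\ \forall c\in\mathcal{C}\}$, so $g^*=\delta_{\mathcal{C}^*}$; $\operatorname{dist}$ is Euclidean distance and $B_R$ the closed ball of radius $R$ at $0$. A function $h\in\Gamma_0$ is Legendre if essentially smooth ($\operatorname{int}\operatorname{dom}h\ne\emptyset$, differentiable there, $\|\nabla h(z^\nu)\|\to\infty$ whenever $\operatorname{int}\operatorname{dom}h\ni z^\nu\to z\in\operatorname{bdry}\operatorname{dom}h$) and essentially strictly convex (strictly convex on every convex subset of $\operatorname{dom}\partial h$); $\nabla h^*$ is the inverse of $\nabla h$ on interiors of domains. $D_h(a,c)=h(a)-h(c)-\langle\nabla h(c),a-c\rangle$ for $a\in\operatorname{dom}h$, $c\in\operatorname{int}\operatorname{dom}h$, $+\infty$ otherwise. Let $\psi\in\Gamma_0(\mathbb{R}^n)$, $\phi\in\Gamma_0(\mathbb{R}^m)$ be Legendre, $\Phi(x,y)=\psi(x)+\phi(y)$, and assume $\operatorname{int}\operatorname{dom}\Phi\cap\operatorname{dom}T\ne\emptyset$.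 Bregman proximal augmented Lagrangian method: given $x^0\in\operatorname{int}\operatorname{dom}\psi$, $y^0\in\operatorname{int}\operatorname{dom}\phi$, step sizes $\sigma_k\ge\sigma>0$ and $\rho_k\in[0,1)$, it generates $s^k\in\operatorname{dom}\psi$, $x^{k+1},y^{k+1},v^k,u^k$ with $(v^k,u^k)\in T(s^k,y^{k+1})$, $x^{k+1}=\nabla\psi^*(\nabla\psi(x^k)-\sigma_kv^k)\in\operatorname{int}\operatorname{dom}\psi$, $y^{k+1}=\nabla\phi^*(\nabla\phi(y^k)-\sigma_ku^k)\in\operatorname{int}\operatorname{dom}\phi$, and $D_\psi(s^k,x^{k+1})\le\rho_k\big(D_\psi(s^k,x^k)+D_\phi(y^{k+1},y^k)\big)$. *)

(* Defs.v *)
From HB Require Import structures.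
From mathcomp Require Import all_boot all_order all_algebra.
From mathcomp Require Import boolp classical_sets reals constructive_ereal ereal.
Set Implicit Arguments. Unset Strict Implicit. Unset Printing Implicit Defensive.
Import Order.TTheory GRing.Theory Num.Theory.
Local Open Scope ring_scope.
Local Open Scope classical_set_scope.

Section Defs.
Variables (R : realType).

Definition inner {n} (u v : 'cV[R]_n) : R := \sum_(i < n) u i ord0 * v i ord0.
Definition enorm {n} (u : 'cV[R]_n) : R := Num.sqrt (inner u u).

Definition interior_e {n} (S : set 'cV[R]_n) : set 'cV[R]_n :=
  [set z | exists2 r : R, 0 < r & forall w, enorm (w - z) < r -> S w].
Definition closure_e {n} (S : set 'cV[R]_n) : set 'cV[R]_n :=
  [set z | forall r : R, 0 < r -> exists2 w, S w & enorm (w - z) < r].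
Definition bdry_e {n} (S : set 'cV[R]_n) : set 'cV[R]_n :=
  [set z | closure_e S z /\ ~ interior_e S z].
Definition dist_e {n} (z : 'cV[R]_n) (S : set 'cV[R]_n) : R :=
  inf [set enorm (z - c) | c in S].
Definition ball_e {n} (r : R) : set 'cV[R]_n := [set y | enorm y <= r].

Definition edom {n} (h : 'cV[R]_n -> \bar R) : set 'cV[R]_n := [set z | (h z < +oo)%E].
Definition proper_fun {n} (h : 'cV[R]_n -> \bar R) :=
  (forall z, h z != -oo%E) /\ exists z, (h z < +oo)%E.
Definition lsc_fun {n} (h : 'cV[R]_n -> \bar R) :=
  forall z (c : R), (c%:E < h z)%E ->
    exists2 d : R, 0 < d & forall w, enorm (w - z) < d -> (c%:E < h w)%E.
Definition convex_fun {n} (h : 'cV[R]_n -> \bar R) :=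
  forall (a b : 'cV[R]_n) (t : R), 0 < t -> t < 1 ->
    (h ((t *: a + (1 - t) *: b)%R) <= t%:E * h a + (1 - t)%R%:E * h b)%E.
Definition Gamma0 {n} (h : 'cV[R]_n -> \bar R) :=
  [/\ proper_fun h, lsc_fun h & convex_fun h].

Definition convex_set {n} (S : set 'cV[R]_n) :=
  forall (a b : 'cV[R]_n) (t : R), 0 <= t -> t <= 1 -> S a -> S b -> S (t *: a + (1 - t) *: b).

Definition subdiff {n} (h : 'cV[R]_n -> \bar R) (x : 'cV[R]_n) : set 'cV[R]_n :=
  [set xi | h x \is a fin_num /\ forall z, (h x + (inner xi (z - x)%R)%:E <= h z)%E].

Definition has_grad {n} (h : 'cV[R]_n -> \bar R) (z g : 'cV[R]_n) :=
  forall eps : R, 0 < eps -> exists2 d : R, 0 < d & forall w, enorm w < d ->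
    h (z + w) \is a fin_num /\
    `|fine (h (z + w)) - fine (h z) - inner g w| <= eps * enorm w.
Definition grad {n} (h : 'cV[R]_n -> \bar R) (z : 'cV[R]_n) : 'cV[R]_n :=
  xget 0 [set g | has_grad h z g].

Definition strictly_convex_on {n} (h : 'cV[R]_n -> \bar R) (S : set 'cV[R]_n) :=
  forall (a b : 'cV[R]_n) (t : R), S a -> S b -> a != b -> 0 < t -> t < 1 ->
    (h ((t *: a + (1 - t) *: b)%R) < t%:E * h a + (1 - t)%R%:E * h b)%E.

Definition essentially_smooth {n} (h : 'cV[R]_n -> \bar R) :=
  [/\ interior_e (edom h) !=set0,
      (forall z, interior_e (edom h) z -> exists g, has_grad h z g) &
      (forall (zs : nat -> 'cV[R]_n) z,
         (forall k, interior_e (edom h) (zs k)) -> bdry_e (edom h) z ->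
         (forall eps : R, 0 < eps -> exists N, forall k, (N <= k)%N -> enorm (zs k - z) < eps) ->
         forall M : R, exists N, forall k, (N <= k)%N -> M < enorm (grad h (zs k)))].

Definition essentially_strictly_convex {n} (h : 'cV[R]_n -> \bar R) :=
  forall S : set 'cV[R]_n, convex_set S -> S `<=` [set x | subdiff h x !=set0] ->
    strictly_convex_on h S.

Definition Legendre {n} (h : 'cV[R]_n -> \bar R) :=
  [/\ Gamma0 h, essentially_smooth h & essentially_strictly_convex h].

Definition bregman {n} (h : 'cV[R]_n -> \bar R) (a c : 'cV[R]_n) : \bar R :=
  if pselect (edom h a /\ interior_e (edom h) c)
  then (h a - h c - (inner (grad h c) (a - c)%R)%:E)%E
  else +oo%E.

Definition closed_convex_cone {m} (C : set 'cV[R]_m) :=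
  [/\ closure_e C `<=` C, convex_set C, C !=set0 &
      forall (t : R) c, 0 <= t -> C c -> C (t *: c)].
Definition dual_cone {m} (C : set 'cV[R]_m) : set 'cV[R]_m :=
  [set y | forall c, C c -> 0 <= inner y c].
Definition indic {m} (S : set 'cV[R]_m) (z : 'cV[R]_m) : \bar R :=
  if pselect (S z) then 0%E else +oo%E.

(* problem data: A(x) = A x - b, g = indicator of -C, hence g^* = indicator of C^* *)
Definition affA {m n} (A : 'M[R]_(m, n)) (b : 'cV[R]_m) (x : 'cV[R]_n) : 'cV[R]_m :=
  A *m x - b.
Definition gstar {m} (C : set 'cV[R]_m) := indic (dual_cone C).

Definition Lag {m n} (f : 'cV[R]_n -> \bar R) (A : 'M[R]_(m, n)) (b : 'cV[R]_m)
  (C : set 'cV[R]_m) (x : 'cV[R]_n) (y : 'cV[R]_m) : \bar R :=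
  (f x + (inner (affA A b x) y)%:E - gstar C y)%E.

Definition saddle_point {m n} (f : 'cV[R]_n -> \bar R) (A : 'M[R]_(m, n)) (b : 'cV[R]_m)
  (C : set 'cV[R]_m) (xs : 'cV[R]_n) (ys : 'cV[R]_m) :=
  Lag f A b C xs ys \is a fin_num /\
  forall x y, (Lag f A b C xs y <= Lag f A b C xs ys)%E /\
              (Lag f A b C xs ys <= Lag f A b C x ys)%E.

(* (v, u) \in T(x, y) for the KKT operator *)
Definition KKT {m n} (f : 'cV[R]_n -> \bar R) (A : 'M[R]_(m, n)) (b : 'cV[R]_m)
  (C : set 'cV[R]_m) (x : 'cV[R]_n) (y : 'cV[R]_m) (v : 'cV[R]_n) (u : 'cV[R]_m) :=
  (exists2 xi, subdiff f x xi & v = xi + A^T *m y) /\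
  (exists2 eta, subdiff (gstar C) y eta & u = eta + b - A *m x).

End Defs.

(* Main.v *)
Require Import Defs.
From HB Require Import structures.
From mathcomp Require Import all_boot all_order all_algebra.
From mathcomp Require Import boolp classical_sets reals constructive_ereal ereal.
From mathcomp Require Import lra ring.
Import Order.TTheory GRing.Theory Num.Theory.
Local Open Scope ring_scope.
Local Open Scope classical_set_scope.

Section Inner.
Variable R : realType.
Variable n : nat.
Implicit Types u v w : 'cV[R]_n.

Lemma innerC u v : inner u v = inner v u.
Proof. by apply: eq_bigr => i _; rewrite mulrC. Qed.
Lemma innerDl u v w : inner (u + v) w = inner u w + inner v w.
Proof. by rewrite /inner -big_split; apply: eq_bigr => i _; rewrite mxE mulrDl. Qed.
Lemma innerDr u v w : inner w (u + v) = inner w u + inner w v.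
Proof. by rewrite innerC innerDl !(innerC w). Qed.
Lemma innerZl a u v : inner (a *: u) v = a * inner u v.
Proof. by rewrite /inner mulr_sumr; apply: eq_bigr => i _; rewrite mxE mulrA. Qed.
Lemma innerZr a u v : inner v (a *: u) = a * inner v u.
Proof. by rewrite innerC innerZl innerC. Qed.
Lemma innerNl u v : inner (- u) v = - inner u v.
Proof. by rewrite -scaleN1r innerZl mulN1r. Qed.
Lemma innerNr u v : inner v (- u) = - inner v u.
Proof. by rewrite innerC innerNl innerC. Qed.
Lemma innerBl u v w : inner (u - v) w = inner u w - inner v w.
Proof. by rewrite innerDl innerNl. Qed.
Lemma innerBr u v w : inner w (u - v) = inner w u - inner w v.
Proof. by rewrite innerDr innerNr. Qed.
Lemma inner0l u : inner 0 u = 0.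
Proof. by rewrite /inner big1 // => i _; rewrite mxE mul0r. Qed.
Lemma inner0r u : inner u 0 = 0.
Proof. by rewrite innerC inner0l. Qed.
Lemma inner_ge0 u : 0 <= inner u u.
Proof. by apply: sumr_ge0 => i _; rewrite -expr2 sqr_ge0. Qed.
Lemma inner_eq0 u : inner u u = 0 -> u = 0.
Proof.
move=> /eqP; rewrite psumr_eq0; last by move=> i _; rewrite -expr2 sqr_ge0.
move=> /allP H; apply/matrixP => i j; rewrite (ord1 j) mxE.
by have := H i (mem_index_enum _); rewrite -expr2 sqrf_eq0 => /eqP.
Qed.
Lemma inner_sum K (F : 'I_K -> 'cV[R]_n) v :
  inner (\sum_(k < K) F k) v = \sum_(k < K) inner (F k) v.
Proof.
elim: K F => [|K IH] F; first by rewrite !big_ord0 inner0l.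
by rewrite !big_ord_recr /= innerDl IH.
Qed.

Lemma inner_expand u v t : inner (u + t *: v) (u + t *: v) =
  inner u u + 2 * t * inner u v + t ^+ 2 * inner v v.
Proof. rewrite innerDl !innerDr !innerZl !innerZr (innerC v u); ring. Qed.

Lemma enorm_ge0 u : 0 <= enorm u. Proof. exact: sqrtr_ge0. Qed.
Lemma enorm_sq u : enorm u ^+ 2 = inner u u.
Proof. by rewrite sqr_sqrtr // inner_ge0. Qed.

Lemma CS2 u v : inner u v ^+ 2 <= inner u u * inner v v.
Proof.
have [Q0|Qn0] := eqVneq (inner v v) 0.
  by rewrite (inner_eq0 _ Q0) !inner0r expr0n /= mulr0.
have Qp : 0 < inner v v by rewrite lt_neqAle eq_sym Qn0 inner_ge0.
have := inner_ge0 (inner v v *: u - inner u v *: v).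
rewrite !innerBl !innerBr !innerZl !innerZr (innerC v u) => H.
rewrite -subr_ge0 -(pmulr_rge0 _ Qp); nra.
Qed.

Lemma CS u v : inner u v <= enorm u * enorm v.
Proof.
have [le0|gt0] := lerP (inner u v) 0.
  by apply: le_trans le0 _; apply: mulr_ge0; apply: enorm_ge0.
have P0 : 0 <= inner u u * inner v v by apply: mulr_ge0; apply: inner_ge0.
rewrite -sqrtrM ?inner_ge0 //.
rewrite -(@ler_pXn2r _ 2) //= ?nnegrE ?sqrtr_ge0 ?(ltW gt0) //.
by rewrite sqr_sqrtr // CS2.
Qed.

Lemma enorm_tri u v : enorm (u + v) <= enorm u + enorm v.
Proof.
rewrite -(@ler_pXn2r _ 2) //= ?nnegrE ?addr_ge0 ?enorm_ge0 //.
rewrite enorm_sq innerDl !innerDr (innerC v u) sqrrD !enorm_sq.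
have := CS u v; lra.
Qed.

Lemma enormZ a u : 0 <= a -> enorm (a *: u) = a * enorm u.
Proof. by move=> a0; rewrite /enorm innerZl innerZr mulrA sqrtrM ?mulr_ge0 // sqrtr_sqr ger0_norm. Qed.

End Inner.
Arguments innerC {R n}.
Arguments innerDl {R n}.
Arguments innerDr {R n}.
Arguments innerZl {R n}.
Arguments innerZr {R n}.
Arguments innerNl {R n}.
Arguments innerNr {R n}.
Arguments innerBl {R n}.
Arguments innerBr {R n}.
Arguments inner0l {R n}.
Arguments inner0r {R n}.
Arguments inner_ge0 {R n}.
Arguments inner_eq0 {R n}.
Arguments inner_sum {R n}.
Arguments enorm_ge0 {R n}.
Arguments enorm_sq {R n}.
Arguments CS2 {R n}.
Arguments CS {R n}.
Arguments enorm_tri {R n}.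
Arguments enormZ {R n}.

Section Cauchy.
Variable R : realType.
Lemma cauchy_lim (u : nat -> R) :
  (forall e : R, 0 < e -> exists N, forall i j, (N <= i)%N -> (N <= j)%N -> `|u i - u j| < e) ->
  exists l, forall e : R, 0 < e -> exists N, forall i, (N <= i)%N -> `|u i - l| < e.
Proof.
move=> H.
pose S := [set x : R | exists N, forall k, (N <= k)%N -> x <= u k].
have [N1 HN1] := H 1 ltr01.
have S0 : S !=set0.
  exists (u N1 - 1); exists N1 => k Hk.
  have := HN1 k N1 Hk (leqnn _); rewrite ltr_norml; lra.
have Sub : forall N (e : R), (forall i j, (N <= i)%N -> (N <= j)%N -> `|u i - u j| < e) ->
    ubound S (u N + e).
  move=> N e HN x [N' HN']; have := HN' (maxn N N') (leq_maxr _ _).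
  have := HN (maxn N N') N (leq_maxl _ _) (leqnn _); rewrite ltr_norml; lra.
have hS : has_sup S by split => //; exists (u N1 + 1); exact: Sub.
exists (sup S) => e e0.
have e20 : 0 < e / 2 by rewrite divr_gt0.
have [N HN] := H _ e20; exists N => i Hi.
have l1 : u N - e / 2 <= sup S.
  apply: sup_upper_bound => //; exists N => k Hk.
  have := HN k N Hk (leqnn _); rewrite ltr_norml; lra.
have l2 : sup S <= u N + e / 2 by apply: ge_sup => //; exact: Sub.
have := HN i N Hi (leqnn _); rewrite !ltr_norml; lra.
Qed.
End Cauchy.
Arguments cauchy_lim {R}.


Section T. Variable R : realType.
Lemma sq_lt_norm (x e : R) : 0 < e -> x ^+ 2 < e ^+ 2 -> `|x| < e.
Proof.
move=> e0 h; rewrite -(@ltr_pXn2r _ 2) //= ?nnegrE ?normr_ge0 ?(ltW e0) //.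
by rewrite real_normK ?num_real.
Qed.
Definition eps (k : nat) : R := (k.+1%:R)^-1.
Lemma eps_gt0 k : 0 < eps k. Proof. by rewrite invr_gt0 ltr0n. Qed.
Lemma eps_mul k : eps k * k.+1%:R = 1. Proof. by rewrite mulVf // pnatr_eq0. Qed.
Lemma eps_mono N k : (N <= k)%N -> eps k <= eps N.
Proof. by move=> Hk; rewrite lef_pV2 ?posrE ?ltr0n // ler_nat ltnS. Qed.
Lemma eps_small (a : R) : 0 < a -> exists N, forall k, (N <= k)%N -> eps k < a.
Proof.
move=> a0; exists (Num.bound (a^-1)) => k Hk.
have h : a^-1 < (Num.bound (a^-1))%:R by apply: archi_boundP; rewrite invr_ge0 ltW.
have h2 : (Num.bound (a^-1))%:R <= k.+1%:R :> R by rewrite ler_nat; apply: leqW.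
have := eps_mul k; have := eps_gt0 k; have := mulVf (lt0r_neq0 a0).
set b := (Num.bound _)%:R in h h2 *; set ai := a^-1 in h *.
move=> h3 h4 h5.
have h6 : ai < k.+1%:R by lra.
have h7 : eps k * ai < 1 by nra.
have -> : eps k = a * (eps k * ai) by rewrite /ai mulrCA divff ?mulr1 // lt0r_neq0.
nra.
Qed.
End T.
Arguments eps_mono {R}.
Arguments eps_small {R}.
Arguments sq_lt_norm {R}.


Ltac vec := apply/matrixP => ? ?; rewrite !mxE; first [ring | (field; lra) | field].

Section Cone.
Variable R : realType.
Variable m : nat.
Variable C : set 'cV[R]_m.
Hypothesis HC : closed_convex_cone C.

Lemma cone_scale t c : 0 <= t -> C c -> C (t *: c).
Proof. by case: HC => _ _ _; apply. Qed.

Lemma cone_add a b : C a -> C b -> C (a + b).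
Proof.
move=> Ca Cb; case: HC => _ cvx _ _.
have h : C ((1/2 : R) *: a + (1 - 1/2) *: b) by apply: cvx => //; lra.
have -> : a + b = 2 *: ((1/2 : R) *: a + (1 - 1/2) *: b) by vec.
by apply: cone_scale => //; lra.
Qed.

Lemma cone0 : C 0.
Proof. case: HC => _ _ [c Cc] _; rewrite -(scale0r c); exact: cone_scale. Qed.

Variable z : 'cV[R]_m.
Let E := [set enorm (z - c') | c' in [set - c | c in C]].
Let d := dist_e z [set - c | c in C].

Lemma E_in c : C c -> E (enorm (z + c)).
Proof. by move=> Cc; exists (- c); [exists c | rewrite opprK]. Qed.

Lemma hinfE : has_inf E.
Proof.
split; first by case: HC => _ _ [c Cc] _; exists (enorm (z + c)); exact: E_in.
exists 0 => x [_ [c _ <-] <-]; exact: enorm_ge0.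
Qed.

Lemma d_lb c : C c -> d <= enorm (z + c).
Proof. by move=> Cc; apply: (ge_inf (proj2 hinfE)); exact: E_in. Qed.

Lemma d_ge0 : 0 <= d.
Proof. apply: lb_le_inf; [exact: (proj1 hinfE) | move=> x [_ [c _ <-] <-]; exact: enorm_ge0]. Qed.

Lemma d_approx e : 0 < e -> exists c, C c /\ enorm (z + c) < d + e.
Proof.
move=> e0; have [x [_ [c Cc <-] <-]] := inf_adherent e0 hinfE.
by move=> h; exists c; split => //; rewrite -[c]opprK -[- - c]/(- - c) opprK; move: h; rewrite opprK.
Qed.


Lemma coord_le (v : 'cV[R]_m) r : v r ord0 ^+ 2 <= inner v v.
Proof.
rewrite /inner (bigD1 r) //= -expr2 lerDl.
by apply: sumr_ge0 => i _; rewrite -expr2 sqr_ge0.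
Qed.

Lemma enormN (v : 'cV[R]_m) : enorm (- v) = enorm v.
Proof. by rewrite /enorm innerNl innerNr opprK. Qed.

Lemma enorm_lt (v : 'cV[R]_m) r : 0 < r -> inner v v < r ^+ 2 -> enorm v < r.
Proof.
move=> r0 h; rewrite /enorm -(ger0_norm (ltW r0)) -sqrtr_sqr ltr_sqrt //.
exact: exprn_gt0.
Qed.

Lemma d_sq c : C c -> d ^+ 2 <= inner (z + c) (z + c).
Proof.
move=> Cc; rewrite -enorm_sq; have := d_lb _ Cc; have := d_ge0; move=> h1 h2.
by rewrite ler_pXn2r ?nnegrE ?enorm_ge0.
Qed.

Lemma proj_exists : exists c0, [/\ C c0, enorm (z + c0) = d,
   dual_cone C (z + c0) & inner (z + c0) c0 = 0].
Proof.
have [cs Hcs] := choice (fun k => d_approx _ (eps_gt0 R k)).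
have d0 := d_ge0.
have par i j : inner (cs i - cs j) (cs i - cs j) <=
    4 * d * (eps R i + eps R j) + 2 * eps R i ^+ 2 + 2 * eps R j ^+ 2.
  have [Ci hi] := Hcs i; have [Cj hj] := Hcs j.
  have Cmid : C ((1/2 : R) *: cs i + (1 - 1/2) *: cs j).
    by case: HC => _ cvx _ _; apply: cvx => //; lra.
  have hm := d_lb _ Cmid.
  have e1 : cs i - cs j = (z + cs i) - (z + cs j) by vec.
  have e2 : z + ((1/2 : R) *: cs i + (1 - 1/2) *: cs j) =
            (1/2 : R) *: ((z + cs i) + (z + cs j)) by vec.
  move: hm hi hj; rewrite e1 e2 enormZ; last lra.
  move: (z + cs i) (z + cs j) => p q hm hi hj.
  have np := enorm_ge0 p; have nq := enorm_ge0 q; have npq := enorm_ge0 (p+q).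
  have sp := enorm_sq p; have sq := enorm_sq q; have spq := enorm_sq (p+q).
  rewrite innerBl !innerBr (innerC q p).
  rewrite innerDl !innerDr (innerC q p) in spq.
  have ei := eps_gt0 R i; have ej := eps_gt0 R j.
  have hP : enorm p ^+ 2 <= (d + eps R i) ^+ 2 by rewrite ler_pXn2r // ?nnegrE; lra.
  have hQ : enorm q ^+ 2 <= (d + eps R j) ^+ 2 by rewrite ler_pXn2r // ?nnegrE; lra.
  have hT : (2 * d) ^+ 2 <= enorm (p + q) ^+ 2 by rewrite ler_pXn2r // ?nnegrE; lra.
  nra.
have cau r : forall e : R, 0 < e -> exists N, forall i j, (N <= i)%N -> (N <= j)%N ->
    `|cs i r ord0 - cs j r ord0| < e.
  move=> e e0.
  have e20 : 0 < e ^+ 2 / (8 * d + 4) by apply: divr_gt0; [exact: exprn_gt0 | lra].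
  have [N HN] := (eps_small _ e20).
  exists N => i j Hi Hj.
  have hNN := HN N (leqnn _).
  have hq : e ^+ 2 / (8 * d + 4) * (8 * d + 4) = e ^+ 2.
    by rewrite mulfVK //; apply: lt0r_neq0; lra.
  have h1 := coord_le (cs i - cs j) r; rewrite !mxE in h1.
  have h2 := par i j.
  have h3 := (@eps_mono R _ _ Hi); have h4 := (@eps_mono R _ _ Hj).
  have h5 := eps_gt0 R i; have h6 := eps_gt0 R j; have h7 := eps_gt0 R N.
  have h8 : eps R N <= 1 by rewrite invr_le1 ?unitfE ?pnatr_eq0 ?ltr0n // ler1n.
  apply: sq_lt_norm => //.
  set x := cs i r ord0 - cs j r ord0 in h1 *.
  set y := inner _ _ in h1 h2.
  set a := eps R N in hNN h3 h4 h7 h8.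
  have k1 : d * eps R i <= d * a by nra.
  have k2 : d * eps R j <= d * a by nra.
  have k3 : eps R i ^+ 2 <= a by rewrite expr2; nra.
  have k4 : eps R j ^+ 2 <= a by rewrite expr2; nra.
  have : y <= (8 * d + 4) * a by nra.
  move=> k5; have k6 : a * (8 * d + 4) < e ^+ 2 by rewrite -hq; nra.
  nra.
have [L HL] := choice (fun r => (cauchy_lim _ (cau r))).
pose c0 : 'cV[R]_m := \col_r L r.
have conv : forall e : R, 0 < e -> exists N, forall k, (N <= k)%N ->
    inner (cs k - c0) (cs k - c0) < e.
  move=> e e0.
  pose e1 := Num.min 1 (e / m.+1%:R).
  have e10 : 0 < e1 by rewrite lt_min ltr01 divr_gt0 // ltr0n.
  have e11 : e1 <= 1 by rewrite ge_min lexx.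
  have e12 : e1 <= e / m.+1%:R by rewrite ge_min lexx orbT.
  have [NN HNN] := choice (fun r => HL r e1 e10).
  exists (\max_(r < m) NN r) => k Hk.
  apply: (@le_lt_trans _ _ (\sum_(r < m) e1)).
    apply: ler_sum => r _; rewrite !mxE.
    have := HNN r k (leq_trans (leq_bigmax r) Hk).
    set x := cs k r ord0 - L r => hx.
    have hx0 := normr_ge0 x.
    have : x * x = `|x| * `|x| by rewrite -normrM ger0_norm // -expr2 sqr_ge0.
    nra.
  rewrite sumr_const card_ord -mulr_natl.
  have hm : e / m.+1%:R * m.+1%:R = e by rewrite mulfVK // pnatr_eq0.
  have hs : m.+1%:R = m%:R + 1 :> R by rewrite natr1.
  have hm0 : 0 <= m%:R :> R by exact: ler0n.
  rewrite hs in hm e12.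
  move: hm e12; set w := e / _ => hm e12.
  have : m%:R * e1 <= m%:R * w by nra.
  nra.
have Cc0 : C c0.
  case: HC => cl _ _ _; apply: cl => rr rr0.
  have [N HN] := conv (rr ^+ 2) (exprn_gt0 2 rr0).
  exists (cs N); first by case: (Hcs N).
  exact: (@enorm_lt _ _ rr0) (HN N (leqnn _)).
have Hn : enorm (z + c0) = d.
  apply/eqP; rewrite eq_le d_lb // andbT.
  rewrite leNgt; apply/negP => hlt.
  have dl0 : 0 < (enorm (z + c0) - d) / 2 by apply: divr_gt0; lra.
  have [N1 HN1] := (eps_small _ dl0).
  have [N2 HN2] := conv _ (exprn_gt0 2 dl0).
  pose k := maxn N1 N2.
  have hk1 := HN1 k (leq_maxl _ _).
  have hk2 := (@enorm_lt _ _ dl0) (HN2 k (leq_maxr _ _)).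
  have [_ hk3] := Hcs k.
  have := enorm_tri (z + cs k) (c0 - cs k).
  have -> : z + cs k + (c0 - cs k) = z + c0 by vec.
  have -> : c0 - cs k = - (cs k - c0) by vec.
  rewrite enormN; lra.
pose w := z + c0.
have ww : inner w w = d ^+ 2 by rewrite -enorm_sq Hn.
have dual : dual_cone C w.
  move=> c Cc; rewrite leNgt; apply/negP => a0.
  set a := inner w c in a0.
  set Q := inner c c.
  have Q0 : 0 <= Q := inner_ge0 c.
  pose t := - a / (Q + 1).
  have t0 : 0 < t by apply: divr_gt0; lra.
  have tQ : t * (Q + 1) = - a by rewrite mulfVK //; apply: lt0r_neq0; lra.
  have := d_sq _ (cone_add _ _ Cc0 (cone_scale _ _ (ltW t0) Cc)).
  have -> : z + (c0 + t *: c) = w + t *: c by rewrite /w; vec.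
  rewrite inner_expand -/a -/Q ww.
  nra.
exists c0; split => //.
have b0 : 0 <= inner w c0 by apply: dual.
apply/eqP; rewrite eq_le b0 andbT; rewrite leNgt; apply/negP => bp.
set b := inner w c0 in b0 bp.
set Q := inner c0 c0.
have Q0 : 0 <= Q := inner_ge0 c0.
pose t := b / (Q + b + 1).
have t0 : 0 < t by apply: divr_gt0; lra.
have tQ : t * (Q + b + 1) = b by rewrite mulfVK //; apply: lt0r_neq0; lra.
have t1 : 0 <= 1 - t by nra.
have := d_sq _ (cone_scale _ _ t1 Cc0).
have -> : z + (1 - t) *: c0 = w + (- t) *: c0 by rewrite /w; vec.
rewrite inner_expand -/b -/Q ww.
nra.
Qed.

End Cone.


Lemma dual_witness (R : realType) m (C : set 'cV[R]_m) (z : 'cV[R]_m) (Rad : R) :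
  closed_convex_cone C -> 0 <= Rad ->
  0 <= dist_e z [set - c | c in C] /\
  exists y1, [/\ dual_cone C y1, enorm y1 <= Rad,
    inner z y1 = Rad * dist_e z [set - c | c in C] &
    forall ys, dual_cone C ys -> inner z ys <= enorm ys * dist_e z [set - c | c in C]].
Proof.
move=> HC R0; split; first exact: (@d_ge0 R m C HC z).
have [c0 [Cc0 Hn Hd Ho]] := @proj_exists R m C HC z.
set d := dist_e z _ in Hn *.
have d0 : 0 <= d by exact: (@d_ge0 R m C HC z).
set w := z + c0 in Hn Hd Ho.
have ww : inner w w = d ^+ 2 by rewrite -enorm_sq Hn.
have zw : inner z w = d ^+ 2.
  have -> : z = w - c0 by rewrite /w; vec.
  by rewrite innerBl ww innerC Ho subr0.
have q0 : 0 <= Rad / d by apply: divr_ge0.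
exists ((Rad / d) *: w); split.
- by move=> c Cc; rewrite innerZl; apply: mulr_ge0 => //; apply: Hd.
- rewrite enormZ // Hn; have [->|dn0] := eqVneq d 0; first by rewrite mulr0.
  by rewrite mulfVK.
- rewrite innerZr zw; have [->|dn0] := eqVneq d 0; first by rewrite !mulr0 expr0n /= mulr0.
  by rewrite expr2 mulrA mulfVK.
- move=> ys Hys.
  have -> : z = w - c0 by rewrite /w; vec.
  rewrite innerBl -Hn mulrC.
  have h1 := CS w ys; have h2 := Hys c0 Cc0; rewrite innerC in h2; lra.
Qed.

Section Convex.
Variable R : realType.
Variable n : nat.
Implicit Types h : 'cV[R]_n -> \bar R.

Lemma fin_dom h a : proper_fun h -> edom h a -> h a \is a fin_num.
Proof. by case=> Hn _ Ha; rewrite fin_numE Hn /= -ltey. Qed.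

Lemma fin_le h a (r : R) : proper_fun h -> (h a <= r%:E)%E -> h a \is a fin_num.
Proof.
move=> Hp Ha; apply: fin_dom => //; rewrite /edom /=.
by apply: le_lt_trans Ha _; rewrite ltry.
Qed.

Lemma enorm0 : enorm (0 : 'cV[R]_n) = 0.
Proof. by rewrite /enorm inner0l sqrtr0. Qed.

Lemma interior_sub (S : set 'cV[R]_n) z : interior_e S z -> S z.
Proof. by case=> r r0 H; apply: H; rewrite subrr enorm0. Qed.

Lemma bregE h a c : proper_fun h -> edom h a -> interior_e (edom h) c ->
  bregman h a c = (fine (h a) - fine (h c) - inner (grad h c) (a - c))%:E.
Proof.
move=> Hp Ha Hc; rewrite /bregman; destruct (pselect (edom h a /\ interior_e (edom h) c)) as [p|p]; last by exfalso; exact: (p (conj Ha Hc)).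
have fa := fin_dom _ _ Hp Ha; have fc := fin_dom _ _ Hp (interior_sub _ _ Hc).
by rewrite /= !EFinB !fineK.
Qed.

Lemma grad_ineq h a c : convex_fun h -> proper_fun h -> (exists g, has_grad h c g) ->
  edom h a -> interior_e (edom h) c ->
  0 <= fine (h a) - fine (h c) - inner (grad h c) (a - c).
Proof.
move=> Hcv Hp Hex Ha Hc.
have Hg : has_grad h c (grad h c) by rewrite /grad; apply: (xgetPex 0 Hex).
have fa := fin_dom _ _ Hp Ha; have fc := fin_dom _ _ Hp (interior_sub _ _ Hc).
set g := grad h c in Hg *.
set del := a - c.
rewrite leNgt; apply/negP => D0.
set D := fine (h a) - fine (h c) - inner g del in D0.
set N := enorm del.
have N0 : 0 <= N := enorm_ge0 del.
pose e := - D / (2 * (N + 1)).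
have e0 : 0 < e by apply: divr_gt0; lra.
have eN : e * (2 * (N + 1)) = - D by rewrite mulfVK //; apply: lt0r_neq0; lra.
have [dd dd0 Hdd] := Hg e e0.
pose t := Num.min (1/2) (dd / (2 * (N + 1))).
have t0 : 0 < t by rewrite lt_min; apply/andP; split; [lra | apply: divr_gt0 => //; lra].
have t1 : t <= 1/2 by rewrite ge_min lexx.
have t2 : t <= dd / (2 * (N + 1)) by rewrite ge_min lexx orbT.
have dN : dd / (2 * (N + 1)) * (2 * (N + 1)) = dd by rewrite mulfVK //; apply: lt0r_neq0; lra.
have tN : t * N < dd.
  move: t2 dN; set q := dd / _ => t2 dN; nra.
have hw : enorm (t *: del) < dd by rewrite enormZ ?(ltW t0).
have [fp Hp2] := Hdd _ hw.
rewrite enormZ ?(ltW t0) // innerZr -/N in Hp2.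
have t1x : t < 1 by lra.
have := Hcv a c t t0 t1x.
have -> : t *: a + (1 - t) *: c = c + t *: del by rewrite /del; vec.
rewrite -[h (c + _)]fineK // -[h a]fineK // -[h c]fineK // -!EFinM -EFinD lee_fin.
move: Hp2; set P := fine (h (c + _)); set Ha' := fine (h a); set Hc' := fine (h c).
move: D0; rewrite /D -/Ha' -/Hc'.
set I := inner g del.
move=> D0 Hp2 Hconv.
have Hp3 : Hc' + t * I - e * (t * N) <= P.
  by move: Hp2; rewrite ler_norml => /andP[h1 h2]; lra.
have h4 : t * (I - e * N - Ha' + Hc') <= 0 by nra.
have h5 : I - e * N - Ha' + Hc' <= 0 by nra.
have h6 : e * N < - D by nra.
move: h6; rewrite /D -/Ha' -/Hc' -/I; lra.
Qed.

Lemma jensen h (sigma : nat -> R) (s : nat -> 'cV[R]_n) :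
  convex_fun h -> proper_fun h -> (forall k, 0 < sigma k) ->
  (forall k, h (s k) \is a fin_num) -> forall K,
  h ((\sum_(k < K.+1) sigma k)^-1 *: \sum_(k < K.+1) sigma k *: s k) \is a fin_num /\
  fine (h ((\sum_(k < K.+1) sigma k)^-1 *: \sum_(k < K.+1) sigma k *: s k)) <=
    (\sum_(k < K.+1) sigma k)^-1 * \sum_(k < K.+1) sigma k * fine (h (s k)).
Proof.
move=> Hcv Hp Hs Hf; elim=> [|K [IH1 IH2]].
  rewrite !big_ord_recr !big_ord0 /= !add0r scalerA mulVf ?lt0r_neq0 // scale1r.
  by rewrite mulrA mulVf ?lt0r_neq0 // mul1r.
have Spos : forall K, 0 < \sum_(k < K.+1) sigma k.
  move=> K'; rewrite big_ord_recr /=; apply: ltr_wpDl (Hs _).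
  by apply: sumr_ge0 => i _; apply: ltW.
have S0 := Spos K.
have e1 : \sum_(k < K.+2) sigma k = \sum_(k < K.+1) sigma k + sigma K.+1 by rewrite big_ord_recr.
have e2 : \sum_(k < K.+2) sigma k *: s k = \sum_(k < K.+1) sigma k *: s k + sigma K.+1 *: s K.+1
  by rewrite big_ord_recr.
have e3 : \sum_(k < K.+2) sigma k * fine (h (s k)) =
  \sum_(k < K.+1) sigma k * fine (h (s k)) + sigma K.+1 * fine (h (s K.+1))
  by rewrite big_ord_recr.
rewrite e1 e2 e3.
move: IH1 IH2 S0.
move: (\sum_(k < K.+1) sigma k) (\sum_(k < K.+1) sigma k *: s k)
  (\sum_(k < K.+1) sigma k * fine (h (s k))) => S V W IH1 IH2 S0.
have sg := Hs K.+1.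
pose t := S / (S + sigma K.+1).
have St : S + sigma K.+1 != 0 by apply: lt0r_neq0; lra.
have t0 : 0 < t by apply: divr_gt0; lra.
have tt : t * (S + sigma K.+1) = S by rewrite mulfVK.
have t1 : t < 1 by nra.
have Hc := Hcv (S^-1 *: V) (s K.+1) t t0 t1.
have -> : (S + sigma K.+1)^-1 *: (V + sigma K.+1 *: s K.+1) =
   t *: (S^-1 *: V) + (1 - t) *: s K.+1.
  rewrite /t; apply/matrixP => i j; rewrite !mxE; field.
  by apply/andP; split => //; apply: lt0r_neq0.
move: Hc; rewrite -[h (S^-1 *: V)]fineK // -[h (s K.+1)]fineK // -!EFinM -EFinD => Hc.
have fn : h (t *: (S^-1 *: V) + (1 - t) *: s K.+1) \is a fin_num by exact: (fin_le _ _ _ Hp Hc).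
split => //.
move: Hc; rewrite -[h (t *: _ + _)]fineK // lee_fin => Hc.
apply: le_trans Hc _.
have -> : (S + sigma K.+1)^-1 * (W + sigma K.+1 * fine (h (s K.+1))) =
   t * (S^-1 * W) + (1 - t) * fine (h (s K.+1)).
  rewrite /t; field; apply/andP; split => //; apply: lt0r_neq0 => //.
rewrite lerD2r; apply: ler_wpM2l => //; exact: ltW.
Qed.

End Convex.
Arguments fin_dom {R n}.
Arguments fin_le {R n}.
Arguments interior_sub {R n}.
Arguments bregE {R n}.
Arguments grad_ineq {R n}.
Arguments jensen {R n}.

Section Misc.
Variable R : realType.

Lemma innerAT m n (A : 'M[R]_(m, n)) (y : 'cV[R]_m) (x : 'cV[R]_n) :
  inner (A^T *m y) x = inner (A *m x) y.
Proof.
rewrite /inner.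
under eq_bigr do rewrite mxE big_distrl.
under [RHS]eq_bigr do rewrite mxE big_distrl.
rewrite exchange_big /=; apply: eq_bigr => j _; apply: eq_bigr => i _.
by rewrite mxE; ring.
Qed.

Lemma indic_fin m (S : set 'cV[R]_m) z : indic S z \is a fin_num -> S z.
Proof. by rewrite /indic; destruct (pselect (S z)) as [p|p]. Qed.

Lemma indic_in m (S : set 'cV[R]_m) z : S z -> indic S z = 0%E.
Proof. by rewrite /indic; destruct (pselect (S z)) as [p|p]. Qed.

Lemma fine_le (x y : \bar R) (r : R) : x \is a fin_num -> y \is a fin_num ->
  (x + r%:E <= y)%E -> fine x + r <= fine y.
Proof. by move=> fx fy; rewrite -[x]fineK // -[y]fineK // -EFinD lee_fin. Qed.

Lemma dual_scale m (C : set 'cV[R]_m) t w : 0 <= t -> dual_cone C w -> dual_cone C (t *: w).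
Proof. by move=> t0 Hw c Cc; rewrite innerZl; apply: mulr_ge0 => //; apply: Hw. Qed.

Lemma Lag_val m n (f : 'cV[R]_n -> \bar R) (A : 'M[R]_(m, n)) b C x w :
  f x \is a fin_num -> dual_cone C w ->
  Lag f A b C x w = (fine (f x) + inner (affA A b x) w)%:E.
Proof. by move=> fx Hw; rewrite /Lag /gstar indic_in // sube0 EFinD fineK. Qed.

End Misc.
Arguments innerAT {R m n}.
Arguments indic_fin {R m}.
Arguments indic_in {R m}.
Arguments fine_le {R}.
Arguments dual_scale {R m}.
Arguments Lag_val {R m n}.

Theorem mainTheorem17 (R : realType) (n m : nat)
  (f psi : 'cV[R]_n -> \bar R) (phi : 'cV[R]_m -> \bar R)
  (A : 'M[R]_(m, n)) (b : 'cV[R]_m) (C : set 'cV[R]_m)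
  (sigma0 : R) (sigma rho : nat -> R)
  (s x v : nat -> 'cV[R]_n) (y u : nat -> 'cV[R]_m)
  (xs : 'cV[R]_n) (ys : 'cV[R]_m) :
  Gamma0 f -> closed_convex_cone C ->
  Legendre psi -> Legendre phi ->
  dual_cone C `<=` edom phi ->
  (* int dom Phi \cap dom T is nonempty *)
  (exists x1 y1, [/\ interior_e (edom psi) x1, interior_e (edom phi) y1 &
                   exists v1 u1, KKT f A b C x1 y1 v1 u1]) ->
  (* the iteration *)
  interior_e (edom psi) (x 0%N) -> interior_e (edom phi) (y 0%N) ->
  0 < sigma0 -> (forall k, sigma0 <= sigma k) ->
  (forall k, 0 <= rho k /\ rho k < 1) ->
  (forall k, edom psi (s k)) ->
  (forall k, KKT f A b C (s k) (y k.+1) (v k) (u k)) ->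
  (forall k, interior_e (edom psi) (x k.+1) /\
             grad psi (x k.+1) = grad psi (x k) - sigma k *: v k) ->
  (forall k, interior_e (edom phi) (y k.+1) /\
             grad phi (y k.+1) = grad phi (y k) - sigma k *: u k) ->
  (forall k, (bregman psi (s k) (x k.+1) <=
              (rho k)%:E * (bregman psi (s k) (x k) + bregman phi (y k.+1) (y k)))%E) ->
  (* saddle point *)
  saddle_point f A b C xs ys -> edom psi xs -> edom phi ys ->
  forall K : nat,
    let Ssig := \sum_(k < K.+1) sigma k in
    let sK := Ssig^-1 *: \sum_(k < K.+1) sigma k *: s k in
    let Rad := 2 * enorm ys + 1 in
    (maxe `|f sK - f xs| (dist_e (affA A b sK) [set - c | c in C])%:E
      <= (Ssig^-1)%:E * (bregman psi xs (x 0%N) +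
            ereal_sup [set bregman phi w (y 0%N) | w in dual_cone C `&` ball_e Rad]))%E.
Proof.
move=> Hf HC Hpsi Hphi Hdom _ Hx0 Hy0 Hs0 Hsig Hrho Hsdom HKKT Hx Hy Hcrit Hsad Hxs Hys K.
cbv zeta.
set Ssig := \sum_(k < K.+1) sigma k.
set sK := Ssig^-1 *: _.
set Rad := 2 * enorm ys + 1.
case: Hf => Hfp _ Hfc.
case: Hpsi => [[Hpp _ Hpc] [_ Hpg _] _].
case: Hphi => [[Hqp _ Hqc] [_ Hqg _] _].
have sig0 k : 0 < sigma k by apply: lt_le_trans (Hsig k).
have xint k : interior_e (edom psi) (x k) by case: k => [|k] //; case: (Hx k).
have yint k : interior_e (edom phi) (y k) by case: k => [|k] //; case: (Hy k).
pose Dp a k := fine (psi a) - fine (psi (x k)) - inner (grad psi (x k)) (a - x k).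
pose Dq w k := fine (phi w) - fine (phi (y k)) - inner (grad phi (y k)) (w - y k).
have Dp0 a k : edom psi a -> 0 <= Dp a k.
  by move=> Ha; apply: grad_ineq => //; apply: Hpg; exact: xint.
have Dq0 w k : edom phi w -> 0 <= Dq w k.
  by move=> Hw; apply: grad_ineq => //; apply: Hqg; exact: yint.
case: Hsad => Hfin Hsad.
have [fxs gys] : f xs \is a fin_num /\ gstar C ys \is a fin_num.
  by move: Hfin; rewrite /Lag fin_numB fin_numD => /andP[/andP[-> _] ->].
have ysC : dual_cone C ys by exact: indic_fin gys.
have fsk k : f (s k) \is a fin_num by case: (HKKT k) => [[xi [] ]].
set Fs := fine (f xs).
have slack w : dual_cone C w -> inner (affA A b xs) w <= 0.
  move=> Hw; rewrite leNgt; apply/negP => a0.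
  set a := inner _ w in a0.
  set M := fine (Lag f A b C xs ys).
  pose t := (`|M - Fs| + 1) / a.
  have t0 : 0 <= t by apply: divr_ge0; [have := normr_ge0 (M - Fs); lra | exact: ltW].
  have ta : t * a = `|M - Fs| + 1 by rewrite mulfVK //; exact: lt0r_neq0.
  have hM : Lag f A b C xs ys = M%:E by rewrite /M fineK.
  have := proj1 (Hsad xs (t *: w)).
  have hL : Lag f A b C xs (t *: w) = (Fs + t * a)%:E.
    by rewrite Lag_val ?innerZr //; apply: dual_scale.
  rewrite hM hL lee_fin.
  have := ler_norm (M - Fs); lra.
have compl : 0 <= inner (affA A b xs) ys.
  have h0 : dual_cone C (0 : 'cV[R]_m) by move=> c _; rewrite inner0l.
  have := proj1 (Hsad xs 0).
  rewrite !Lag_val // inner0r lee_fin; lra.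
have step k w : dual_cone C w ->
    sigma k * (fine (f (s k)) - Fs + inner (affA A b (s k)) w) <=
    Dp xs k - Dp xs k.+1 + Dq w k - Dq w k.+1.
  move=> Hw.
  have Hwd := Hdom w Hw.
  have [[xi [fxi Hxi] ev] [eta [feta Heta] eu]] := HKKT k.
  have y'C : dual_cone C (y k.+1) by exact: indic_fin feta.
  have sub1 := fine_le _ _ _ fxi fxs (Hxi xs).
  have sub2 : inner eta (w - y k.+1) <= 0.
    have := Heta w; rewrite /gstar !indic_in // add0e lee_fin //.
  have sl := slack _ y'C.
  have lowb : fine (f (s k)) - Fs + inner (affA A b (s k)) w <=
      inner (v k) (s k - xs) + inner (u k) (y k.+1 - w).
    move: sub1 sub2 sl; rewrite ev eu /affA ?innerDl ?innerNl ?innerDr ?innerNr ?innerDl ?innerNl ?innerAT ?mulmxBr ?innerDl ?innerNl.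
    rewrite /Fs; lra.
  have ident : sigma k * (inner (v k) (s k - xs) + inner (u k) (y k.+1 - w)) =
      Dp xs k - Dp xs k.+1 + Dp (s k) k.+1 - Dp (s k) k + Dq w k - Dq w k.+1 - Dq (y k.+1) k.
    rewrite /Dp /Dq (proj2 (Hx k)) (proj2 (Hy k)) ?innerDl ?innerNl ?innerZl ?innerDr ?innerNr ?innerDl ?innerNl ?innerZl.
    ring.
  have crit : Dp (s k) k.+1 <= rho k * (Dp (s k) k + Dq (y k.+1) k).
    move: (Hcrit k).
    rewrite (bregE _ _ _ Hpp (Hsdom k) (xint k.+1)) (bregE _ _ _ Hpp (Hsdom k) (xint k)).
    rewrite (bregE _ _ _ Hqp (interior_sub _ _ (yint k.+1)) (yint k)).
    by rewrite -EFinD -EFinM lee_fin.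
  have crit' : Dp (s k) k.+1 <= Dp (s k) k + Dq (y k.+1) k.
    have := Dp0 (s k) k (Hsdom k); have := Dq0 (y k.+1) k (interior_sub _ _ (yint k.+1)).
    have := Hrho k; nra.
  have := ler_wpM2l (ltW (sig0 k)) lowb; rewrite ident; lra.
have tel N w : dual_cone C w ->
    \sum_(k < N) sigma k * (fine (f (s k)) - Fs + inner (affA A b (s k)) w) <=
    Dp xs 0 - Dp xs N + Dq w 0 - Dq w N.
  move=> Hw; elim: N => [|N IH]; first by rewrite big_ord0; lra.
  by rewrite big_ord_recr /=; have := step N w Hw; lra.
have Spos : 0 < Ssig.
  rewrite /Ssig big_ord_recr /=; apply: ltr_wpDl (sig0 _).
  by apply: sumr_ge0 => i _; apply: ltW.
have [fsK JK] := jensen f sigma s Hfc Hfp sig0 fsk K.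
have innK w : inner (affA A b sK) w =
    Ssig^-1 * \sum_(k < K.+1) sigma k * inner (affA A b (s k)) w.
  have AT (p : 'cV[R]_n) : inner (A *m p) w = inner p (A^T *m w) by rewrite -innerAT innerC.
  have -> : \sum_(k < K.+1) sigma k * inner (affA A b (s k)) w =
      \sum_(k < K.+1) sigma k * inner (s k) (A^T *m w) - Ssig * inner b w.
    by rewrite /Ssig mulr_suml -sumrB; apply: eq_bigr => k _; rewrite /affA innerBl AT; ring.
  rewrite /affA innerBl AT /sK innerZl inner_sum.
  under eq_bigr do rewrite innerZl.
  by rewrite mulrBr mulrA mulVf ?lt0r_neq0 // mul1r.
have key w : dual_cone C w ->
    fine (f sK) - Fs + inner (affA A b sK) w <= Ssig^-1 * (Dp xs 0 + Dq w 0).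
  move=> Hw.
  have hT := tel K.+1 w Hw.
  have hDp := Dp0 xs K.+1 Hxs; have hDq := Dq0 w K.+1 (Hdom w Hw).
  have eS : \sum_(k < K.+1) sigma k * (fine (f (s k)) - Fs + inner (affA A b (s k)) w) =
    \sum_(k < K.+1) sigma k * fine (f (s k)) - Ssig * Fs +
    \sum_(k < K.+1) sigma k * inner (affA A b (s k)) w.
    by rewrite /Ssig mulr_suml -sumrB -big_split /=; apply: eq_bigr => k _; ring.
  rewrite eS in hT.
  rewrite innK.
  move: JK hT; rewrite -/Ssig.
  set SF := \sum_(k < K.+1) sigma k * fine (f (s k)).
  set SZ := \sum_(k < K.+1) sigma k * inner (affA A b (s k)) w.
  move=> JK hT.
  have iS : Ssig^-1 * Ssig = 1 by rewrite mulVf ?lt0r_neq0.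
  have iS0 : 0 < Ssig^-1 by rewrite invr_gt0.
  have h1 : Ssig^-1 * (SF - Ssig * Fs + SZ) <= Ssig^-1 * (Dp xs 0 + Dq w 0).
    by apply: ler_wpM2l; [exact: ltW | lra].
  have h2 : Ssig^-1 * (SF - Ssig * Fs + SZ) = Ssig^-1 * SF - Fs + Ssig^-1 * SZ.
    by rewrite !mulrDr mulrN mulrA iS mul1r.
  lra.
have lowy : Fs <= fine (f sK) + inner (affA A b sK) ys.
  have := proj2 (Hsad sK ys); rewrite !Lag_val // lee_fin; have := compl; rewrite /Fs; lra.
have Rad0 : 0 <= Rad by rewrite /Rad; have := enorm_ge0 ys; lra.
have [d0 [y1 [y1C y1n y1z yss]]] := dual_witness _ _ C (affA A b sK) Rad HC Rad0.
set d := dist_e _ _ in d0 y1z yss *.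
have k1 := key y1 y1C.
have k2 := yss ys ysC.
set B := Ssig^-1 * (Dp xs 0 + Dq y1 0) in k1.
have hB1 : `|fine (f sK) - Fs| <= B.
  rewrite ler_norml; apply/andP; split; move: k1 k2 lowy; rewrite y1z /Rad;
  have := enorm_ge0 ys; nra.
have hB2 : d <= B.
  move: k1 k2 lowy; rewrite y1z /Rad; have := enorm_ge0 ys; nra.
rewrite -(fineK fsK) -(fineK fxs) -EFinB abse_EFin -EFin_max.
apply: (@le_trans _ _ B%:E); first by rewrite lee_fin ge_max hB1 hB2.
rewrite /B EFinM (bregE _ _ _ Hpp Hxs Hx0) EFinD.
apply: lee_wpmul2l; first by rewrite lee_fin invr_ge0 ltW.
apply: leeD2l.
rewrite -(bregE _ _ _ Hqp (Hdom _ y1C) Hy0).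
apply: ereal_sup_ubound; exists y1 => //; split => //.
Qed.
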